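(* Let $\alpha$ be a partial action datum of $M$ on $X\in\mathscr{C}$, let $\eta\colon F\to\Delta(Y)$ be a colimit of the functor $F$ associated to $\alpha$, and let $\beta$ be the global action associated to $\eta$. Then $\eta_e\colon\alpha\to\beta$ is a reflection of $\alpha$ in $\mathrm{Act}_M(\mathscr{C})$.
   Context: Standing assumptions: $M$ is a monoid with identity $e$ and $\mathscr{C}$ is a category with pullbacks. A partial action datum of $M$ on $X$ assigns to each $m\in M$ an isomorphism class of spans $[\operatorname{dom}\alpha_m,\iota_m,\alpha_m]$ with $\iota_m\colon\operatorname{dom}\alpha_m\to X$ a monomorphism and $\alpha_m\colon\operatorname{dom}\alpha_m\to X$ (isomorphism of spans: an isomorphism of apexes commuting with both legs); representatives are fixed. A global action of $M$ on $Y$ is a datum with $\beta(m)=[Y,\mathrm{id}_Y,\beta_m]$, $\beta_e=\mathrm{id}_Y$, $\beta_n\circ\beta_m=\beta_{nm}$. Given data $\alpha$ on $X$ and $\beta$ on $Y$ with representatives $[\operatorname{dom}\alpha_m,\iota_m,\alpha_m]$, $[\operatorname{dom}\beta_m,\kappa_m,\beta_m]$, a datum morphism $\alpha\to\beta$ is a morphism $f\colon X\to Y$ such that for each $m$ there is $f_m\colon\operatorname{dom}\alpha_m\to\operatorname{dom}\beta_m$ with $\kappa_m\circ f_m=f\circ\iota_m$ and $\beta_m\circ f_m=f\circ\alpha_m$. $\mathrm{Act}_M(\mathscr{C})$ is the category of global actions with datum morphisms. A reflection of $\alpha$ in $\mathrm{Act}_M(\mathscr{C})$ is a datum morphism $r\colon\alpha\to\beta$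 with $\beta$ global such that for every datum morphism $f\colon\alpha\to\gamma$ with $\gamma$ global there is a unique datum morphism $f'\colon\beta\to\gamma$ with $f'\circ r=f$. Let $I$ be the category with objects $(M\times M)\sqcup M$, with for each $(m,n)$ one morphism $(m,n)\to mn$ and one morphism $(m,n)\to m$ and no other non-identity morphisms. The functor associated to $\alpha$ is $F\colon I\to\mathscr{C}$ with $F(m,n)=\operatorname{dom}\alpha_n$, $F(m)=X$, $(m,n)\to mn\mapsto\iota_n$, $(m,n)\to m\mapsto\alpha_n$; $\Delta(Y)$ is the constant functor at $Y$. For a colimit $\eta\colon F\to\Delta(Y)$ of $F$, the global action associated to $\eta$ is $\beta(m)=[Y,\mathrm{id}_Y,\beta_m]$, where $\beta_m\colon Y\to Y$ is the unique morphism with $\beta_m\circ\eta_{(s,t)}=\eta_{(ms,t)}$ and $\beta_m\circ\eta_s=\eta_{ms}$ for all $s,t\in M$ (this is a global action). *)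

(* Defs.v *)
Record Category := {
  Obj :> Type;
  Hom : Obj -> Obj -> Type;
  idm : forall A, Hom A A;
  comp : forall {A B C}, Hom B C -> Hom A B -> Hom A C;
  comp_assoc : forall A B C D (h : Hom C D) (g : Hom B C) (f : Hom A B),
      comp h (comp g f) = comp (comp h g) f;
  comp_id_l : forall A B (f : Hom A B), comp (idm B) f = f;
  comp_id_r : forall A B (f : Hom A B), comp f (idm A) = f }.

Arguments Hom {c} A B.
Arguments idm {c} A.
Arguments comp {c A B C} g f.

Record Monoid := {
  mcar :> Type;
  mmul : mcar -> mcar -> mcar;
  munit : mcar;
  mmul_assoc : forall a b c, mmul a (mmul b c) = mmul (mmul a b) c;
  mmul_1l : forall a, mmul munit a = a;
  mmul_1r : forall a, mmul a munit = a }.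

Arguments mmul {m} a b.
Arguments munit {m}.

Definition is_mono {C : Category} {A B : C} (f : Hom A B) : Prop :=
  forall (Z : C) (g h : Hom Z A), comp f g = comp f h -> g = h.

Definition has_pullbacks (C : Category) : Prop :=
  forall (A B D : C) (f : Hom A D) (g : Hom B D),
    exists (P : C) (p1 : Hom P A) (p2 : Hom P B),
      comp f p1 = comp g p2 /\
      forall (Q : C) (q1 : Hom Q A) (q2 : Hom Q B), comp f q1 = comp g q2 ->
        exists u : Hom Q P, (comp p1 u = q1 /\ comp p2 u = q2) /\
          forall v : Hom Q P, comp p1 v = q1 -> comp p2 v = q2 -> v = u.

(* A partial action datum of M on X, given by its fixed representatives
   [dom α_m, ι_m, α_m], with ι_m a monomorphism. *)
Record PDatum (M : Monoid) (C : Category) (X : C) : Type := {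
  pdom : M -> C;
  piota : forall m, Hom (pdom m) X;
  palpha : forall m, Hom (pdom m) X;
  piota_mono : forall m, is_mono (piota m) }.

Arguments pdom {M C X} p m.
Arguments piota {M C X} p m.
Arguments palpha {M C X} p m.

Definition datum_of_maps {M : Monoid} {C : Category} {Y : C}
  (b : M -> Hom Y Y) : PDatum M C Y.
Proof.
  refine {| pdom := fun _ => Y; piota := fun _ => idm Y; palpha := b |}.
  intros m Z g h H. rewrite !comp_id_l in H. exact H.
Defined.

Definition is_global_action {M : Monoid} {C : Category} {Y : C}
  (b : M -> Hom Y Y) : Prop :=
  b munit = idm Y /\ forall m n : M, comp (b n) (b m) = b (mmul n m).

Definition is_datum_morphism {M : Monoid} {C : Category} {X Y : C}
  (a : PDatum M C X) (b : PDatum M C Y) (f : Hom X Y) : Prop :=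
  forall m : M, exists fm : Hom (pdom a m) (pdom b m),
    comp (piota b m) fm = comp f (piota a m) /\
    comp (palpha b m) fm = comp f (palpha a m).

Definition is_reflection {M : Monoid} {C : Category} {X Y : C}
  (a : PDatum M C X) (b : M -> Hom Y Y) (r : Hom X Y) : Prop :=
  is_global_action b /\
  is_datum_morphism a (datum_of_maps b) r /\
  forall (Z : C) (g : M -> Hom Z Z), is_global_action g ->
    forall f : Hom X Z, is_datum_morphism a (datum_of_maps g) f ->
      exists f' : Hom Y Z,
        (is_datum_morphism (datum_of_maps b) (datum_of_maps g) f' /\
         comp f' r = f) /\
        forall f'' : Hom Y Z,
          is_datum_morphism (datum_of_maps b) (datum_of_maps g) f'' ->
          comp f'' r = f -> f'' = f'.

(* The index category I: objects (M × M) ⊔ M; the non-identity morphisms are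
   (m,n) -> mn and (m,n) -> m. *)
Definition IObj (M : Monoid) : Type := ((M * M) + M)%type.

Definition Fobj {M : Monoid} {C : Category} {X : C} (a : PDatum M C X)
  (i : IObj M) : C :=
  match i with
  | inl (m, n) => pdom a n
  | inr m => X
  end.

(* η : F -> Δ(Y) is a natural transformation (cocone).  Naturality squares
   for identities are trivial; for (m,n) -> mn (F-image ι_n) and
   (m,n) -> m (F-image α_n) they read as below. *)
Definition is_cocone {M : Monoid} {C : Category} {X : C} (a : PDatum M C X)
  {Y : C} (eta : forall i : IObj M, Hom (Fobj a i) Y) : Prop :=
  forall m n : M,
    comp (eta (inr (mmul m n))) (piota a n) = eta (inl (m, n)) /\
    comp (eta (inr m)) (palpha a n) = eta (inl (m, n)).

Definition is_colimit {M : Monoid} {C : Category} {X : C} (a : PDatum M C X)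
  {Y : C} (eta : forall i : IObj M, Hom (Fobj a i) Y) : Prop :=
  is_cocone a eta /\
  forall (Z : C) (zeta : forall i : IObj M, Hom (Fobj a i) Z),
    is_cocone a zeta ->
    exists u : Hom Y Z, (forall i, comp u (eta i) = zeta i) /\
      forall v : Hom Y Z, (forall i, comp v (eta i) = zeta i) -> v = u.

Definition is_associated_action {M : Monoid} {C : Category} {X : C}
  (a : PDatum M C X) {Y : C} (eta : forall i : IObj M, Hom (Fobj a i) Y)
  (b : M -> Hom Y Y) : Prop :=
  forall m s t : M,
    comp (b m) (eta (inl (s, t))) = eta (inl (mmul m s, t)) /\
    comp (b m) (eta (inr s)) = eta (inr (mmul m s)).

(* Main.v *)
Require Import Defs.

Lemma cocone_comp {M : Monoid} {C : Category} {X : C} (a : PDatum M C X)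
  {Y Z : C} (eta : forall i : IObj M, Hom (Fobj a i) Y) (h : Hom Y Z) :
  is_cocone a eta -> is_cocone a (fun i => comp h (eta i)).
Proof.
  intros H m n; destruct (H m n) as [H1 H2]; split;
  rewrite <- comp_assoc; [rewrite H1|rewrite H2]; reflexivity.
Qed.

Lemma colim_uniq {M : Monoid} {C : Category} {X : C} (a : PDatum M C X)
  {Y Z : C} (eta : forall i : IObj M, Hom (Fobj a i) Y) :
  is_colimit a eta -> forall zeta : forall i, Hom (Fobj a i) Z,
  is_cocone a zeta -> forall v1 v2 : Hom Y Z,
  (forall i, comp v1 (eta i) = zeta i) -> (forall i, comp v2 (eta i) = zeta i) ->
  v1 = v2.
Proof.
  intros [_ H] zeta Hz v1 v2 H1 H2.
  destruct (H Z zeta Hz) as [u [_ Hu]].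
  rewrite (Hu v1 H1), (Hu v2 H2); reflexivity.
Qed.

Theorem mainTheorem8 (M : Monoid) (C : Category) (HC : has_pullbacks C)
  (X : C) (a : PDatum M C X) (Y : C)
  (eta : forall i : IObj M, Hom (Fobj a i) Y)
  (Heta : is_colimit a eta)
  (b : M -> Hom Y Y) (Hb : is_associated_action a eta b) :
  is_reflection a b (eta (inr munit)).
Proof.
  assert (Hc : is_cocone a eta) by apply Heta.
  assert (Hbs : forall s, eta (inr s) = comp (b s) (eta (inr munit))).
  { intro s. destruct (Hb s munit munit) as [_ H]. rewrite mmul_1r in H. auto. }
  assert (Hglob : is_global_action b).
  { split.
    - apply (colim_uniq a eta Heta eta Hc).
      + intros [[s t]|s].
        * destruct (Hb munit s t) as [H1 H2]; rewrite mmul_1l in H1; exact H1.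
        * destruct (Hb munit s s) as [H1 H2]; rewrite mmul_1l in H2; exact H2.
      + intro i; apply comp_id_l.
    - intros m n.
      apply (colim_uniq a eta Heta (fun i => comp (b (mmul n m)) (eta i))
               (cocone_comp a eta _ Hc)).
      + intros [[s t]|s]; rewrite <- comp_assoc.
        * destruct (Hb m s t) as [H1 H2]; destruct (Hb n (mmul m s) t) as [H3 H4];
          destruct (Hb (mmul n m) s t) as [H5 H6].
          cbn [Fobj] in *. rewrite H1, H3, H5, mmul_assoc; reflexivity.
        * destruct (Hb m s s) as [H1 H2]; destruct (Hb n (mmul m s) s) as [H3 H4];
          destruct (Hb (mmul n m) s s) as [H5 H6].
          cbn [Fobj] in *. rewrite H2, H4, H6, mmul_assoc; reflexivity.
      + reflexivity. }
  split; [exact Hglob|split].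
  - intro m. exists (comp (eta (inr munit)) (piota a m)). simpl. split.
    + apply comp_id_l.
    + rewrite comp_assoc. cbn [Fobj] in *. rewrite <- (Hbs m).
      destruct (Hc munit m) as [H1 H2]. rewrite mmul_1l in H1. cbn [Fobj] in *. rewrite H1, H2. reflexivity.
  - intros Z g [Hg1 Hg2] f Hf.
    assert (Hf' : forall m, comp (g m) (comp f (piota a m)) = comp f (palpha a m)).
    { intro m. destruct (Hf m) as [fm [E1 E2]]. simpl in *.
      rewrite comp_id_l in E1. congruence. }
    set (zeta := fun i : IObj M => match i as i0 return Hom (Fobj a i0) Z with
                  | inl (s, t) => comp (g s) (comp f (palpha a t))
                  | inr s => comp (g s) f end).
    assert (Hz : is_cocone a zeta).
    { intros s t; simpl; split.
      - rewrite <- Hg2. rewrite <- !comp_assoc. rewrite Hf'. reflexivity.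
      - rewrite comp_assoc. reflexivity. }
    assert (Hgz : forall m, is_cocone a (fun i => comp (g m) (zeta i)))
      by (intro; apply cocone_comp; exact Hz).
    destruct Heta as [_ Hu].
    destruct (Hu Z zeta Hz) as [u [Hu1 Hu2]].
    exists u. split; [split|].
    + intro m. exists u. simpl. split.
      * rewrite comp_id_l, comp_id_r. reflexivity.
      * apply (colim_uniq a eta (conj Hc Hu) _ (Hgz m)).
        -- intro i; rewrite <- comp_assoc, Hu1; reflexivity.
        -- intros [[s t]|s]; rewrite <- comp_assoc.
           ++ destruct (Hb m s t) as [H1 H2]; rewrite H1; refine (eq_trans (Hu1 (inl (mmul m s, t))) _); simpl;
              rewrite <- Hg2, <- comp_assoc; reflexivity.
           ++ destruct (Hb m s s) as [H1 H2]; rewrite H2; refine (eq_trans (Hu1 (inr (mmul m s))) _); simpl;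
              rewrite <- Hg2, <- comp_assoc; reflexivity.
    + refine (eq_trans (Hu1 (inr munit)) _). simpl. rewrite Hg1. apply comp_id_l.
    + intros f'' Hd Hr. apply Hu2.
      assert (Hcom : forall m, comp (g m) f'' = comp f'' (b m)).
      { intro m. destruct (Hd m) as [fm [E1 E2]]. simpl in *.
        rewrite comp_id_l, comp_id_r in E1. congruence. }
      assert (Hs : forall s, comp f'' (eta (inr s)) = comp (g s) f).
      { intro s. rewrite (Hbs s), comp_assoc, <- Hcom, <- comp_assoc. apply f_equal. exact Hr. }
      intros [[s t]|s]; simpl.
      * destruct (Hc s t) as [_ H2]. rewrite <- H2, comp_assoc, Hs, <- comp_assoc. reflexivity.
      * apply Hs.
Qed.
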